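(* Assume $f$ is strongly convex on $\mathrm{dom}\,\psi$ with parameter $\mu>0$ (i.e. $\langle\nabla^2 f(x)h,h\rangle \ge \mu\|h\|^2$ for all $x\in\mathrm{dom}\,\psi$, $h\in\mathbb{E}$). Consider the method: choose $H \ge L_2$, $x_0 \in \mathrm{dom}\,\psi$ and $F'_0 \in \partial F(x_0)$; for $k \ge 0$ set $g_k = \|F'_k\|_*$, $A_k = \frac{1}{\sigma}\sqrt{\frac{H}{3}g_k}$, $x_{k+1} = T_{A_k}(x_k)$, and $$F'_{k+1} = \nabla f(x_{k+1}) - \nabla f(x_k) - \nabla^2 f(x_k)(x_{k+1} - x_k) - A_k(\nabla d(x_{k+1}) - \nabla d(x_k)).$$ Then for any $k\ge 0$, $$\|F'_{k+1}\|_* \;\le\; \frac{2c}{\mu}\sqrt{\frac{H}{3}}\,\|F'_k\|_*^{3/2}, \qquad c = \sigma^{-1} + \frac{3L_2}{2H}.$$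
   Context: $\mathbb{E}$ is a finite-dimensional real vector space with an arbitrary norm $\|\cdot\|$; $\mathbb{E}^*$ is its dual with dual norm $\|g\|_* = \max\{\langle g, x\rangle : \|x\|\le 1\}$; for a self-adjoint linear operator $B:\mathbb{E}\to\mathbb{E}^*$, $\|B\| = \max\{|\langle Bx,x\rangle| : \|x\|\le 1\}$. $F = f + \psi$, where $\psi$ is a closed convex function with $\mathrm{dom}\,\psi \subseteq \mathbb{E}$ and $f$ is convex and twice continuously differentiable with $\|\nabla^2 f(x) - \nabla^2 f(y)\| \le L_2\|x-y\|$ for all $x,y\in\mathrm{dom}\,\psi$. The scaling function $d$ is differentiable and satisfies, for some $\sigma\in(0,1]$ and all $x,y \in \mathrm{dom}\,\psi$: $d(y) \ge d(x) + \langle \nabla d(x), y-x\rangle + \frac{\sigma}{2}\|y-x\|^2$ and $\|\nabla d(x) - \nabla d(y)\|_* \le \|x-y\|$. Bregman distance: $\rho(x,y) = d(y) - d(x) - \langle \nabla d(x), y-x\rangle$. For $\bar x\in\mathrm{dom}\,\psi$ and $A>0$, $$T_A(\bar x) = \arg\min_{y\in\mathrm{dom}\,\psi}\Big[ f(\bar x) + \langle \nabla f(\bar x), y-\bar x\rangle + \tfrac12 \langle \nabla^2 f(\bar x)(y-\bar x), y-\bar x\rangle + A\rho(\bar x,y) + \psi(y)\Big].$$ (Each $F'_k$ is an element of $\partial F(x_k)$.) *)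

(* Defs.v *)
From HB Require Import structures.
From mathcomp Require Import all_boot all_order all_algebra.
From mathcomp Require Import all_classical all_reals all_analysis.
Set Implicit Arguments. Unset Strict Implicit. Unset Printing Implicit Defensive.
Import Order.TTheory GRing.Theory Num.Theory.
Import numFieldNormedType.Exports.
Local Open Scope classical_set_scope.
Local Open Scope ring_scope.

(* E = 'rV[R]_n, E* = 'rV[R]_n with the pairing <g, x> = sum_i g_i x_i.
   A self-adjoint operator B : E -> E* is a matrix B : 'M_n acting by
   x |-> x *m B. *)

Definition pair {R : realType} {n : nat} (g x : 'rV[R]_n) : R :=
  \sum_(i < n) g ord0 i * x ord0 i.

Definition is_norm {R : realType} {n : nat} (N : 'rV[R]_n -> R) : Prop :=
  [/\ forall x, N x = 0 -> x = 0,
      forall (a : R) x, N (a *: x) = `|a| * N x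
    & forall x y, N (x + y) <= N x + N y].

Definition dual_norm {R : realType} {n : nat} (N : 'rV[R]_n -> R)
  (g : 'rV[R]_n) : R :=
  sup [set pair g x | x in [set x | N x <= 1]].

Definition op_norm {R : realType} {n : nat} (N : 'rV[R]_n -> R)
  (B : 'M[R]_n) : R :=
  sup [set `|pair (x *m B) x| | x in [set x | N x <= 1]].

(* Subdifferential of F = f + psi (F = +oo outside dom psi = D) at x in D. *)
Definition subdiff {R : realType} {n : nat} (D : set 'rV[R]_n)
  (F : 'rV[R]_n -> R) (x : 'rV[R]_n) : set 'rV[R]_n :=
  [set g | forall y, D y -> F x + pair g (y - x) <= F y].

Definition bregman {R : realType} {n : nat} (d : 'rV[R]_n -> R)
  (gd : 'rV[R]_n -> 'rV[R]_n) (x y : 'rV[R]_n) : R :=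
  d y - d x - pair (gd x) (y - x).

Definition model {R : realType} {n : nat} (f psi d : 'rV[R]_n -> R)
  (gf gd : 'rV[R]_n -> 'rV[R]_n) (Hf : 'rV[R]_n -> 'M[R]_n)
  (A : R) (xbar y : 'rV[R]_n) : R :=
  f xbar + pair (gf xbar) (y - xbar)
  + 2^-1 * pair ((y - xbar) *m Hf xbar) (y - xbar)
  + A * bregman d gd xbar y + psi y.

Definition is_T {R : realType} {n : nat} (D : set 'rV[R]_n)
  (f psi d : 'rV[R]_n -> R) (gf gd : 'rV[R]_n -> 'rV[R]_n)
  (Hf : 'rV[R]_n -> 'M[R]_n) (A : R) (xbar y : 'rV[R]_n) : Prop :=
  D y /\ forall z, D z -> model f psi d gf gd Hf A xbar y <= model f psi d gf gd Hf A xbar z.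

Definition convex_set {R : realType} {n : nat} (D : set 'rV[R]_n) : Prop :=
  forall x y (t : R), D x -> D y -> 0 <= t <= 1 -> D (t *: x + (1 - t) *: y).

Definition convex_on {R : realType} {n : nat} (D : set 'rV[R]_n)
  (g : 'rV[R]_n -> R) : Prop :=
  forall x y (t : R), D x -> D y -> 0 <= t <= 1 ->
    g (t *: x + (1 - t) *: y) <= t * g x + (1 - t) * g y.

(* psi : E -> R U {+oo} is represented by its values on its domain D;
   closed = the epigraph is closed. *)
Definition closed_convex_fun {R : realType} {n : nat} (D : set 'rV[R]_n)
  (psi : 'rV[R]_n -> R) : Prop :=
  [/\ convex_set D, convex_on D psi
    & closed [set p : 'rV[R]_n * R | D p.1 /\ psi p.1 <= p.2]].

(* Main.v *)
Require Import Defs.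
From HB Require Import structures.
From mathcomp Require Import all_boot all_order all_algebra.
From mathcomp Require Import all_classical all_reals all_analysis.
From mathcomp Require Import ring lra.
Import Order.TTheory GRing.Theory Num.Theory.
Import numFieldNormedType.Exports.
Local Open Scope classical_set_scope.
Local Open Scope ring_scope.
Set Implicit Arguments. Unset Strict Implicit. Unset Printing Implicit Defensive.
Section S.
Variables (R : realType) (n : nat).
Implicit Types (g x y : 'rV[R]_n).

Lemma pairDl g1 g2 x : pair (g1 + g2) x = pair g1 x + pair g2 x.
Proof. by rewrite /pair -big_split; apply: eq_bigr => i _; rewrite mxE mulrDl. Qed.
Lemma pairDr g x1 x2 : pair g (x1 + x2) = pair g x1 + pair g x2.
Proof. by rewrite /pair -big_split; apply: eq_bigr => i _; rewrite mxE mulrDr. Qed.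
Lemma pairZl a g x : pair (a *: g) x = a * pair g x.
Proof. by rewrite /pair mulr_sumr; apply: eq_bigr => i _; rewrite mxE mulrA. Qed.
Lemma pairZr a g x : pair g (a *: x) = a * pair g x.
Proof. by rewrite /pair mulr_sumr; apply: eq_bigr => i _; rewrite mxE mulrCA. Qed.
Lemma pairNl g x : pair (- g) x = - pair g x.
Proof. by rewrite -scaleN1r pairZl mulN1r. Qed.
Lemma pairNr g x : pair g (- x) = - pair g x.
Proof. by rewrite -scaleN1r pairZr mulN1r. Qed.
Lemma pairBl g1 g2 x : pair (g1 - g2) x = pair g1 x - pair g2 x.
Proof. by rewrite pairDl pairNl. Qed.
Lemma pairBr g x1 x2 : pair g (x1 - x2) = pair g x1 - pair g x2.
Proof. by rewrite pairDr pairNr. Qed.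
Lemma pair0l x : pair 0 x = 0.
Proof. by rewrite -(scale0r 0) pairZl mul0r. Qed.
Lemma pair0r g : pair g 0 = 0.
Proof. by rewrite -(scale0r 0) pairZr mul0r. Qed.

Lemma coord_le (m k : nat) (M : 'M[R]_(m, k)) i j : `|M i j| <= `|M|.
Proof.
rewrite [leRHS]/Num.Def.normr /= mx_normrE.
by apply: le_trans (le_bigmax _ _ (i, j)) => /=.
Qed.

Lemma mxnorm_le (m k : nat) (M : 'M[R]_(m, k)) c : 0 <= c ->
  (forall i j, `|M i j| <= c) -> `|M| <= c.
Proof.
move=> c0 H; rewrite [leLHS]/Num.Def.normr /= mx_normrE.
by apply: bigmax_le => // -[i j] _; exact: H.
Qed.

Lemma pair_bound g x : `|pair g x| <= n%:R * `|g| * `|x|.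
Proof.
rewrite /pair; apply: le_trans (ler_norm_sum _ _ _) _.
apply: le_trans (_ : \sum_(i < n) (`|g| * `|x|) <= _).
  by apply: ler_sum => i _; rewrite normrM; apply: ler_pM => //; exact: coord_le.
by rewrite sumr_const card_ord mulr_natl mulrnAl.
Qed.

Lemma mulmx_bound x (M : 'M[R]_n) : `|x *m M| <= n%:R * `|x| * `|M|.
Proof.
apply: mxnorm_le; first by apply: mulr_ge0; [apply: mulr_ge0|].
move=> i j; rewrite mxE; apply: le_trans (ler_norm_sum _ _ _) _.
apply: le_trans (_ : \sum_(k < n) (`|x| * `|M|) <= _).
  by apply: ler_sum => k _; rewrite normrM; apply: ler_pM => //; exact: coord_le.
by rewrite sumr_const card_ord mulr_natl mulrnAl.
Qed.
End S.
Section Norm.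
Variables (R : realType) (n : nat) (N : 'rV[R]_n -> R).
Hypothesis hN : is_norm N.
Implicit Types (g x y : 'rV[R]_n).

Lemma NZ a x : N (a *: x) = `|a| * N x.
Proof. by case: hN => _ h _; exact: h. Qed.
Lemma Ntri x y : N (x + y) <= N x + N y.
Proof. by case: hN => _ _ h; exact: h. Qed.
Lemma Neq0 x : N x = 0 -> x = 0.
Proof. by case: hN => h _ _; exact: h. Qed.
Lemma N0 : N 0 = 0.
Proof. by rewrite -(scale0r (0 : 'rV[R]_n)) NZ normr0 mul0r. Qed.
Lemma NN x : N (- x) = N x.
Proof. by rewrite -scaleN1r NZ normrN normr1 mul1r. Qed.
Lemma Nge0 x : 0 <= N x.
Proof.
have := Ntri x (- x); rewrite subrr N0 NN => h.
by rewrite -(@pmulr_rge0 _ 2) // mulr2n mulrDl mul1r.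
Qed.
Lemma NB x y : N (x - y) = N (y - x).
Proof. by rewrite -NN opprB. Qed.
Lemma Nsub x y : N x - N y <= N (x - y).
Proof. by have := Ntri (x - y) y; rewrite subrK; lra. Qed.

Lemma Nsum (I : finType) (F : I -> 'rV[R]_n) :
  N (\sum_i F i) <= \sum_i N (F i).
Proof.
elim/big_ind2 : _ => //; first by rewrite N0.
move=> a b c d h1 h2; apply: le_trans (Ntri _ _) _; exact: lerD.
Qed.

Lemma N_upper : exists2 M, 0 <= M & forall x, N x <= M * `|x|.
Proof.
exists (\sum_(j < n) N (delta_mx 0 j)).
  by apply: sumr_ge0 => j _; exact: Nge0.
move=> x; rewrite [x in N x]row_sum_delta. apply: le_trans (Nsum _) _.
rewrite mulr_suml; apply: ler_sum => j _; rewrite NZ mulrC.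
by apply: ler_wpM2l; [exact: Nge0| exact: coord_le].
Qed.

Lemma N_cont : continuous N.
Proof.
have [M M0 HM] := N_upper.
move=> x; apply/(@cvgrPdist_lt R R^o _ (nbhs x) (nbhs_filter x)) => e e0.
apply/nbhs_ballP; exists (e / (M + 1)) => /=.
  by apply: divr_gt0 => //; lra.
move=> y; rewrite -ball_normE /= => hxy.
have h1 : `|N x - N y| <= N (x - y).
  rewrite ler_norml Nsub andbT; have := Nsub y x; rewrite NB; lra.
apply: le_lt_trans h1 _; apply: le_lt_trans (HM _) _.
have : M * `|x - y| <= (M + 1) * `|x - y| by apply: ler_wpM2r => //; lra.
move=> h; apply: le_lt_trans h _.
by rewrite mulrC -ltr_pdivlMr; [|lra].
Qed.

Lemma N_lower : exists2 C, 0 < C & forall x, `|x| <= C * N x.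
Proof.
set S := [set x : 'rV[R]_n | `|x| = 1].
have [[c0 Sc0]|S0] := pselect (S !=set0).
  have cS : compact S.
    apply: bounded_closed_compact.
      exists 1; split => //= M M1 x; rewrite /S /= => ->; exact: ltW.
    have -> : S = Num.norm @^-1` [set 1] by [].
    apply: closed_comp; last exact: closed_eq.
    by move=> x _; exact: norm_continuous.
  have [c cS_ Hc] := EVT_min_rV (ex_intro _ c0 Sc0) cS (continuous_subspaceT N_cont).
  rewrite inE /S /= in cS_.
  have Nc : 0 < N c.
    rewrite lt_neqAle Nge0 andbT; apply/eqP => /esym /Neq0 c0'.
    by move: cS_; rewrite c0' normr0 => /eqP; rewrite eq_sym oner_eq0.
  exists (N c)^-1; first by rewrite invr_gt0.
  move=> x; have [->|x0] := eqVneq x 0; first by rewrite normr0 N0 mulr0.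
  have nx : 0 < `|x| by rewrite normr_gt0.
  have := Hc (`|x|^-1 *: x); rewrite inE /S /= normrZ normrV ?unitfE ?normr_eq0 //.
  rewrite normr_id mulVf ?normr_eq0 // => /(_ erefl).
  rewrite NZ normrV ?unitfE ?normr_eq0 // normr_id.
  move=> h; rewrite mulrC ler_pdivlMr //; apply: le_trans (ler_wpM2l (ltW nx) h) _.
  by rewrite mulrA mulfV ?mul1r // gt_eqF.
exists 1 => // x; have [->|x0] := eqVneq x 0; first by rewrite normr0 N0 mulr0.
exfalso; apply: S0; exists (`|x|^-1 *: x).
by rewrite /S /= normrZ normrV ?unitfE ?normr_eq0 // normr_id mulVf ?normr_eq0.
Qed.
End Norm.
Section Dual.
Variables (R : realType) (n : nat) (N : 'rV[R]_n -> R).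
Hypothesis hN : is_norm N.
Implicit Types (g x y : 'rV[R]_n).

Lemma ball_bound : exists2 C, 0 < C & forall y, N y <= 1 -> `|y| <= C.
Proof.
have [C C0 HC] := N_lower hN; exists C => // y hy.
apply: le_trans (HC y) _; rewrite -[leRHS]mulr1; apply: ler_wpM2l; [exact: ltW|exact: hy].
Qed.

Lemma dual_has_sup g : has_sup [set pair g y | y in [set y | N y <= 1]].
Proof.
have [C C0 HC] := ball_bound; split.
  by exists (pair g 0), 0 => //=; rewrite (N0 hN).
exists (n%:R * `|g| * C) => _ [y /= hy <-].
apply: le_trans (ler_norm _) _; apply: le_trans (pair_bound _ _) _.
by apply: ler_wpM2l; [apply: mulr_ge0| exact: HC].
Qed.

Lemma dual_ge0 g : 0 <= dual_norm N g.
Proof.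
rewrite /dual_norm; apply: (sup_upper_bound (dual_has_sup g)).
by exists 0 => /=; [rewrite (N0 hN)|rewrite pair0r].
Qed.

Lemma pair_le_dual g x : pair g x <= dual_norm N g * N x.
Proof.
have [->|x0] := eqVneq x 0; first by rewrite pair0r (N0 hN) mulr0.
have Nx : 0 < N x by rewrite lt_neqAle (Nge0 hN) // andbT; apply/eqP => /esym /(Neq0 hN); apply/eqP.
have : pair g ((N x)^-1 *: x) <= dual_norm N g.
  rewrite /dual_norm; apply: (sup_upper_bound (dual_has_sup g)).
  exists ((N x)^-1 *: x) => //=; rewrite (NZ hN) ger0_norm ?invr_ge0 ?(Nge0 hN) //.
  by rewrite mulVf // gt_eqF.
by rewrite pairZr mulrC ler_pdivrMr.
Qed.

Lemma dual_le g c : (forall y, N y <= 1 -> pair g y <= c) -> dual_norm N g <= c.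
Proof.
move=> H; rewrite /dual_norm; apply: ge_sup.
  by exists (pair g 0), 0 => //=; rewrite (N0 hN).
by move=> _ [y /= hy <-]; exact: H.
Qed.

Lemma op_has_sup (B : 'M[R]_n) :
  has_sup [set `|pair (x *m B) x| | x in [set x | N x <= 1]].
Proof.
have [C C0 HC] := ball_bound; split.
  by exists `|pair (0 *m B) 0|, 0 => //=; rewrite (N0 hN).
exists (n%:R * (n%:R * C * `|B|) * C) => _ [y /= hy <-].
apply: le_trans (pair_bound _ _) _.
apply: ler_pM; [apply: mulr_ge0 => //; apply: mulr_ge0 => //|by []| |exact: HC].
apply: ler_wpM2l => //; apply: le_trans (mulmx_bound _ _) _.
apply: ler_wpM2r => //; apply: ler_wpM2l => //; exact: HC.
Qed.

Lemma op_le (B : 'M[R]_n) x : `|pair (x *m B) x| <= op_norm N B * N x ^+ 2.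
Proof.
have [->|x0] := eqVneq x 0; first by rewrite pair0r (N0 hN) normr0 expr2 !mulr0.
have Nx : 0 < N x by rewrite lt_neqAle (Nge0 hN) // andbT; apply/eqP => /esym /(Neq0 hN); apply/eqP.
have : `|pair (((N x)^-1 *: x) *m B) ((N x)^-1 *: x)| <= op_norm N B.
  rewrite /op_norm; apply: (sup_upper_bound (op_has_sup B)).
  exists ((N x)^-1 *: x) => //=; rewrite (NZ hN) ger0_norm ?invr_ge0 ?(Nge0 hN) //.
  by rewrite mulVf // gt_eqF.
rewrite -scalemxAl pairZl pairZr mulrA normrM ger0_norm; last first.
  by apply: mulr_ge0; rewrite invr_ge0 (Nge0 hN).
by rewrite -expr2 exprVn mulrC ler_pdivrMr ?exprn_gt0.
Qed.
End Dual.
Section Deriv.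
Variables (R : realType) (n : nat).

Lemma path_derive (W : normedModType R) (F : 'rV[R]_n -> W) p u t :
  derivable F (p + t *: u) u ->
  is_derive t 1 (fun s : R => F (p + s *: u)) ('D_u F (p + t *: u)).
Proof.
move=> dF.
have E : (fun h : R => h^-1 *: (((fun s : R => F (p + s *: u)) \o shift t) (h *: 1)
            - (fun s : R => F (p + s *: u)) t)) =
         (fun h : R => h^-1 *: ((F \o shift (p + t *: u)) (h *: u) - F (p + t *: u))).
  apply: funext => h /=; congr (_ *: (F _ - _)).
  by rewrite [h *: 1]mulr1 scalerDl addrCA.
apply: DeriveDef; first by rewrite /derivable E.
by rewrite /derive E.
Qed.

Lemma pair_derive (V : normedModType R) (G : V -> 'rV[R]_n) a w v :
  derivable G a w ->
  derivable (fun q => pair (G q) v) a w /\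
  'D_w (fun q => pair (G q) v) a = pair ('D_w G a) v.
Proof.
move=> dG.
have E : (fun q => pair (G q) v) = \sum_(i < n) (v ord0 i *: (fun q => G q ord0 i)).
  apply: funext => q; rewrite /pair fct_sumE; apply: eq_bigr => i _.
  by rewrite /= mulrC.
have di : forall i, derivable (v ord0 i *: (fun q => G q ord0 i)) a w.
  by move=> i; apply: derivableZ; move/derivable_mxP: dG; exact.
rewrite E; split; first exact: derivable_sum.
rewrite derive_sum // (derive_mx dG) /pair; apply: eq_bigr => i _.
by rewrite deriveZ ?mxE /= 1?mulrC //; move/derivable_mxP: dG; exact.
Qed.
End Deriv.
Section Approx.
Variables (R : realType) (n : nat).

Lemma dq_approx (F : 'rV[R]_n -> R) q v : derivable F q v ->
  forall e, 0 < e -> exists2 d, 0 < d & forall t, 0 < t < d ->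
    `|F (q + t *: v) - F q - t * 'D_v F q| <= e * t.
Proof.
move=> dF e e0.
have := dF; rewrite /derivable => /cvg_ex [l Hl].
have Dl : 'D_v F q = l by apply: cvg_lim.
move/(@cvgrPdist_le _ R^o): Hl => /(_ e e0).
move=> /nbhs_ballP [d /= d0 Hd]; exists d => // t /andP[t0 td].
have : ball (0 : R) d t by rewrite -ball_normE /= sub0r normrN gtr0_norm.
move=> /Hd; rewrite gt_eqF // => /(_ isT) /=; rewrite Dl.
move=> h; rewrite (addrC q).
set X := F (t *: v + q) - F q.
have key : forall a b c : R, c != 0 -> a - c * b = - ((b - c^-1 * a) * c).
  by move=> a b c c0; field.
rewrite (key _ _ _ (lt0r_neq0 t0)) normrN normrM (gtr0_norm t0).
by rewrite ler_pM2r.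
Qed.
End Approx.
Section Inv.
Variables (R : realType) (n : nat).
Implicit Types (x y z v : 'rV[R]_n).

Lemma combE (t : R) z x : t *: z + (1 - t) *: x = x + t *: (z - x).
Proof. by apply/rowP => i; rewrite !mxE; ring. Qed.

Lemma Dseg (D : set 'rV[R]_n) x z (t : R) : Defs.convex_set D -> D x -> D z ->
  0 <= t <= 1 -> D (x + t *: (z - x)).
Proof. by move=> cD Dx Dz t01; rewrite -combE; exact: (cD _ _ _ Dz Dx t01). Qed.

Lemma convseg (D : set 'rV[R]_n) (p : 'rV[R]_n -> R) x z (t : R) :
  convex_on D p -> D x -> D z -> 0 <= t <= 1 ->
  p (x + t *: (z - x)) <= t * p z + (1 - t) * p x.
Proof. by move=> cp Dx Dz t01; rewrite -combE; exact: (cp _ _ _ Dz Dx t01). Qed.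

Lemma inv0 (D : set 'rV[R]_n) (f psi : 'rV[R]_n -> R) (gf : 'rV[R]_n -> 'rV[R]_n)
  x F' : Defs.convex_set D -> convex_on D psi ->
  (forall y, differentiable f y) -> (forall y h, 'd f y h = pair (gf y) h) ->
  D x -> subdiff D (fun y => f y + psi y) x F' ->
  forall z, D z -> pair (F' - gf x) (z - x) <= psi z - psi x.
Proof.
move=> cD cpsi df dfE Dx sub z Dz; set v := z - x.
have dv : derivable f x v by exact: diff_derivable.
have Lv : 'D_v f x = pair (gf x) v by rewrite deriveE // dfE.
apply/ler_addgt0Pr => e e0.
have [d d0 Hd] := dq_approx dv e0.
set t := Num.min (d / 2) (1 / 2).
have t0 : 0 < t by rewrite lt_min; apply/andP; split; apply: divr_gt0.
have td : t < d by rewrite gt_min; apply/orP; left; rewrite ltr_pdivrMr //; lra.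
have t1 : t <= 1 by rewrite ge_min; apply/orP; right; lra.
have t01 : 0 <= t <= 1 by rewrite (ltW t0) t1.
have h1 := sub _ (Dseg cD Dx Dz t01).
have h2 := convseg cpsi Dx Dz t01.
have := Hd t; rewrite t0 td Lv => /(_ isT) h3.
have ev : x + t *: v - x = t *: v by rewrite addrC addKr.
move: h1; rewrite ev pairZr => h1.
have : t * pair F' v <= t * (pair (gf x) v + e + (psi z - psi x)).
  move: h3; rewrite ler_norml => /andP[_ h3]; nra.
rewrite ler_pM2l // pairBl; lra.
Qed.
End Inv.
Section Schwarz.
Variables (R : realType) (n : nat).
Variables (f : 'rV[R]_n -> R) (gf : 'rV[R]_n -> 'rV[R]_n) (Hf : 'rV[R]_n -> 'M[R]_n).
Hypothesis df : forall y, differentiable f y.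
Hypothesis dfE : forall y h, 'd f y h = pair (gf y) h.
Hypothesis dgf : forall y, differentiable gf y.
Hypothesis dgfE : forall y h, 'd gf y h = h *m Hf y.
Implicit Types (p q u v : 'rV[R]_n).

Lemma f_path p u (t : R) :
  is_derive t 1 (fun s : R => f (p + s *: u)) (pair (gf (p + t *: u)) u).
Proof.
have := path_derive (@diff_derivable _ _ _ f (p + t *: u) u (df _)).
by rewrite deriveE // dfE.
Qed.

Lemma gf_path p u v (t : R) :
  is_derive t 1 (fun s : R => pair (gf (p + s *: u)) v) (pair (u *m Hf (p + t *: u)) v).
Proof.
have [d1 d2] := pair_derive v (@diff_derivable _ _ _ gf (p + t *: u) u (dgf _)).
have := path_derive d1.
by rewrite d2 deriveE // dgfE.
Qed.

Lemma cont_of_derive (g : R -> R) a b :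
  (forall t, derivable g t 1) -> {within `[a, b], continuous g}.
Proof. by move=> dg; apply: derivable_within_continuous => t _; exact: dg. Qed.

Lemma mixed p u v (s : R) : 0 < s -> exists xi eta : R,
  [/\ 0 <= xi <= s, 0 <= eta <= s &
  f (p + s *: v + s *: u) - f (p + s *: u) - f (p + s *: v) + f p
    = s ^+ 2 * pair (v *m Hf (p + xi *: u + eta *: v)) u].
Proof.
move=> s0.
set al := fun tau : R => f (p + s *: v + tau *: u) - f (p + tau *: u).
have dal : forall tau : R, is_derive tau 1 al
    (pair (gf (p + s *: v + tau *: u)) u - pair (gf (p + tau *: u)) u).
  by move=> tau; apply: is_deriveB; [exact: f_path|exact: f_path].
have [xi xiI Exi] := MVT s0 (fun tau _ => dal tau)
  (cont_of_derive (fun tau => @ex_derive _ _ _ _ _ _ _ (dal tau))).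
set be := fun sg : R => pair (gf (p + xi *: u + sg *: v)) u.
have dbe : forall sg : R, is_derive sg 1 be (pair (v *m Hf (p + xi *: u + sg *: v)) u).
  by move=> sg; exact: gf_path.
have [eta etaI Eeta] := MVT s0 (fun sg _ => dbe sg)
  (cont_of_derive (fun sg => @ex_derive _ _ _ _ _ _ _ (dbe sg))).
exists xi, eta; split.
- by move: xiI; rewrite in_itv /= => /andP[/ltW -> /ltW ->].
- by move: etaI; rewrite in_itv /= => /andP[/ltW -> /ltW ->].
have -> : f (p + s *: v + s *: u) - f (p + s *: u) - f (p + s *: v) + f p = al s - al 0.
  rewrite /al !scale0r !addr0; lra.
rewrite Exi subr0.
have -> : p + s *: v + xi *: u = p + xi *: u + s *: v by rewrite addrAC.
have -> : pair (gf (p + xi *: u + s *: v)) u - pair (gf (p + xi *: u)) u = be s - be 0.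
  by rewrite /be scale0r addr0.
rewrite Eeta subr0.
by rewrite expr2 -mulrA mulrC.
Qed.
End Schwarz.
Section Schwarz2.
Variables (R : realType) (n : nat).
Variables (f : 'rV[R]_n -> R) (gf : 'rV[R]_n -> 'rV[R]_n) (Hf : 'rV[R]_n -> 'M[R]_n).
Hypothesis df : forall y, differentiable f y.
Hypothesis dfE : forall y h, 'd f y h = pair (gf y) h.
Hypothesis dgf : forall y, differentiable gf y.
Hypothesis dgfE : forall y h, 'd gf y h = h *m Hf y.
Hypothesis cHf : continuous Hf.
Implicit Types (p q u v : 'rV[R]_n).

Lemma cont_eps p e : 0 < e -> exists2 d, 0 < d & forall q, `|p - q| < d -> `|Hf p - Hf q| < e.
Proof.
move=> e0.
have := (cvgrPdist_lt (FF := nbhs_filter p) Hf (Hf p)).1 (@cHf p) e e0.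
move=> /nbhs_ballP [d d0 Hd]; exists d => // q hq; apply: Hd.
by rewrite -ball_normE.
Qed.

Lemma pairM_bound u (M : 'M[R]_n) v :
  `|pair (u *m M) v| <= n%:R * n%:R * `|u| * `|v| * `|M|.
Proof.
apply: le_trans (pair_bound _ _) _.
have := mulmx_bound u M => h.
have : n%:R * `|u *m M| * `|v| <= n%:R * (n%:R * `|u| * `|M|) * `|v|.
  by apply: ler_wpM2r => //; apply: ler_wpM2l.
move=> /le_trans; apply; rewrite le_eqVlt; apply/orP; left; apply/eqP; ring.
Qed.

Lemma schwarz p u v : pair (u *m Hf p) v = pair (v *m Hf p) u.
Proof.
apply/eqP; rewrite -subr_eq0 -normr_le0; apply/ler_addgt0Pr => e e0; rewrite add0r.
set K := n%:R * n%:R * `|u| * `|v| + 1.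
have K0 : 0 < K by rewrite /K ltr_pwDr // !mulr_ge0.
have [d d0 Hd] := cont_eps p (divr_gt0 e0 (mulr_gt0 (ltr0n _ 2) K0)).
set s := d / (2 * (`|u| + `|v| + 1)).
have uv0 : 0 < `|u| + `|v| + 1 by rewrite ltr_pwDr // addr_ge0.
have s0 : 0 < s by rewrite /s divr_gt0 // mulr_gt0.
have sb : s * (`|u| + `|v|) < d.
  have e1 : s * (`|u| + `|v| + 1) = d / 2.
    by rewrite /s; field; exact: lt0r_neq0.
  have : s * (`|u| + `|v|) <= s * (`|u| + `|v| + 1).
    by apply: ler_wpM2l; [exact: ltW|rewrite lerDl].
  lra.
have near_q : forall a b (xi eta : R), 0 <= xi <= s -> 0 <= eta <= s ->
    `|p - (p + xi *: a + eta *: b)| < d -> `|Hf p - Hf (p + xi *: a + eta *: b)| < e / (2 * K).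
  by move=> a b xi eta _ _ /Hd.
have close : forall a b (xi eta : R), 0 <= xi <= s -> 0 <= eta <= s ->
    (a = u /\ b = v) \/ (a = v /\ b = u) ->
    `|p - (p + xi *: a + eta *: b)| < d.
  move=> a b xi eta /andP[x0 xs] /andP[y0 ys] hab.
  have -> : p - (p + xi *: a + eta *: b) = - (xi *: a + eta *: b).
    by apply/rowP => i; rewrite !mxE; ring.
  rewrite normrN; apply: le_lt_trans (ler_normD _ _) _.
  rewrite !normrZ (ger0_norm x0) (ger0_norm y0); apply: le_lt_trans sb.
  have := normr_ge0 u; have := normr_ge0 v.
  by case: hab => -[-> ->]; nra.
have [xi [eta [xiI etaI E1]]] := mixed df dfE dgf dgfE p u v s0.
have [xi' [eta' [xiI' etaI' E2]]] := mixed df dfE dgf dgfE p v u s0.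
have EA : pair (v *m Hf (p + xi *: u + eta *: v)) u
        = pair (u *m Hf (p + xi' *: v + eta' *: u)) v.
  have s20 : s ^+ 2 != 0 by rewrite expf_neq0 // lt0r_neq0.
  apply: (mulfI s20); rewrite -E1 -E2.
  rewrite (addrAC p (s *: v)); lra.
have h1 := near_q _ _ _ _ xiI etaI (close _ _ _ _ xiI etaI (or_introl (conj erefl erefl))).
have h2 := near_q _ _ _ _ xiI' etaI' (close _ _ _ _ xiI' etaI' (or_intror (conj erefl erefl))).
set q1 := p + xi *: u + eta *: v in EA h1.
set q2 := p + xi' *: v + eta' *: u in EA h2.
have -> : pair (u *m Hf p) v - pair (v *m Hf p) u
   = pair (u *m (Hf p - Hf q2)) v - pair (v *m (Hf p - Hf q1)) u.
  rewrite !mulmxBr !pairBl EA; lra.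
apply: le_trans (ler_normB _ _) _.
have b1 := pairM_bound u (Hf p - Hf q2) v.
have b2 := pairM_bound v (Hf p - Hf q1) u.
set Kz := n%:R * n%:R * `|u| * `|v|.
have Kz0 : 0 <= Kz by rewrite /Kz !mulr_ge0.
have KK : Kz <= K by rewrite /K lerDl.
have b1' : `|pair (u *m (Hf p - Hf q2)) v| <= Kz * `|Hf p - Hf q2| by [].
have b2' : `|pair (v *m (Hf p - Hf q1)) u| <= Kz * `|Hf p - Hf q1|.
  by move: b2; rewrite /Kz (mulrAC _ `|v|).
have eK : K * (e / (2 * K)) = e / 2 by field; exact: lt0r_neq0.
have m1 : Kz * `|Hf p - Hf q1| <= K * (e / (2 * K)).
  apply: ler_pM => //; exact: ltW.
have m2 : Kz * `|Hf p - Hf q2| <= K * (e / (2 * K)).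
  apply: ler_pM => //; exact: ltW.
lra.
Qed.
End Schwarz2.
Section Step.
Variables (R : realType) (n : nat).
Implicit Types (x y z v : 'rV[R]_n).

Lemma inv_step (D : set 'rV[R]_n) (f psi d : 'rV[R]_n -> R)
  (gf gd : 'rV[R]_n -> 'rV[R]_n) (Hf : 'rV[R]_n -> 'M[R]_n) (A : R) x y :
  Defs.convex_set D -> convex_on D psi ->
  (forall y, differentiable d y) -> (forall y h, 'd d y h = pair (gd y) h) ->
  (forall u w, pair (u *m Hf x) w = pair (w *m Hf x) u) ->
  0 <= A -> is_T D f psi d gf gd Hf A x y ->
  forall z, D z ->
  pair (- (gf x + (y - x) *m Hf x + A *: (gd y - gd x))) (z - y) <= psi z - psi y.
Proof.
move=> cD cpsi dd ddE sym A0 [Dy hmin] z Dz.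
set v := z - y; set a := y - x; set B := Hf x.
have dv : derivable d y v by exact: diff_derivable.
have Lv : 'D_v d y = pair (gd y) v by rewrite deriveE // ddE.
apply/ler_addgt0Pr => e e0.
set e1 := e / (2 * (A + 1)).
have e10 : 0 < e1 by rewrite /e1 divr_gt0 // mulr_gt0 //; lra.
have Ae1 : A * e1 <= e / 2.
  rewrite /e1; have -> : A * (e / (2 * (A + 1))) = e / 2 * (A / (A + 1)) by field; lra.
  rewrite ler_piMr //; first lra.
  by rewrite ler_pdivrMr; lra.
have [dl dl0 Hd] := dq_approx dv e10.
set Qv := pair (v *m B) v.
set t := Num.min (Num.min (dl / 2) (1 / 2)) (e / (`|Qv| + 1)).
have Qv1 : 0 < `|Qv| + 1 by rewrite ltr_pwDr.
have t0 : 0 < t by rewrite !lt_min !divr_gt0.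
have td : t < dl by rewrite !gt_min; apply/orP; left; apply/orP; left; rewrite ltr_pdivrMr //; lra.
have t1 : t <= 1 by rewrite !ge_min; apply/orP; left; apply/orP; right; lra.
have tQ : t * `|Qv| <= e.
  have : t <= e / (`|Qv| + 1) by rewrite !ge_min lexx orbT.
  rewrite ler_pdivlMr // => h; have := normr_ge0 Qv; nra.
have t01 : 0 <= t <= 1 by rewrite (ltW t0) t1.
have Dw := Dseg cD Dy Dz t01.
have hpsi := convseg cpsi Dy Dz t01.
have := Hd t; rewrite t0 td Lv => /(_ isT) hd.
have hm := hmin _ Dw.
rewrite /model /bregman -/v in hm. rewrite -/v in hpsi.
have ew : y + t *: v - x = a + t *: v by rewrite /a addrAC.
rewrite ew -/a in hm.
clearbody a v.
rewrite !pairDr !pairZr mulmxDl -scalemxAl !pairDl !pairZl in hm.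
rewrite -/B (sym v a) -/B -/Qv in hm.
set X := pair (- (gf x + a *m B + A *: (gd y - gd x))) v.
have eX : X = - (pair (gf x) v + pair (a *m B) v + A * (pair (gd y) v - pair (gd x) v)).
  by rewrite /X pairNl !pairDl pairZl pairBl.
move: hd; rewrite ler_norml => /andP[_ hd].
have hd' : A * (d (y + t *: v) - d y - t * pair (gd y) v) <= A * (e1 * t).
  exact: ler_wpM2l.
have hQ : t * Qv <= e by apply: le_trans tQ; rewrite ler_pM2l // ler_norm.
have key : 0 <= t * (- X + (psi z - psi y) + t / 2 * Qv + A * e1).
  rewrite eX; lra.
have : 0 <= - X + (psi z - psi y) + t / 2 * Qv + A * e1 by rewrite -(pmulr_rge0 _ t0).
nra.
Qed.
End Step.
Section Poly.
Variable (R : realType).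
Lemma der_sq (s : R) : is_derive s 1 (fun u : R => u * u) (s + s).
Proof.
have h := @is_deriveM R R id id s 1 1 1 (is_derive_id _ _) (is_derive_id _ _).
by apply: is_derive_eq h _ => /=; rewrite /GRing.scale /= !mulr1.
Qed.
Lemma der_lin (s k : R) : is_derive s 1 (fun u : R => u * k) k.
Proof.
have h := @is_deriveM R R id (cst k) s 1 1 0 (is_derive_id _ _) (is_derive_cst _ _ _).
by apply: is_derive_eq h _ => /=; rewrite /GRing.scale /= mulr0 mulr1 add0r.
Qed.
End Poly.
Section Rem.
Variables (R : realType) (n : nat) (N : 'rV[R]_n -> R).
Hypothesis hN : is_norm N.
Implicit Types (x y z v h : 'rV[R]_n).

Lemma polar (M : 'M[R]_n) c h v : 0 <= c ->
  (forall u w, pair (u *m M) w = pair (w *m M) u) ->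
  (forall w, `|pair (w *m M) w| <= c * N w ^+ 2) -> N v <= 1 ->
  pair (h *m M) v <= 2 * c * N h.
Proof.
move=> c0 sym HQ Nv.
have [->|h0] := eqVneq h 0; first by rewrite mul0mx pair0l (N0 hN) mulr0.
set r := N h.
have r0 : 0 < r by rewrite lt_neqAle (Nge0 hN) andbT; apply/eqP => /esym /(Neq0 hN); apply/eqP.
have id4 : pair ((h + r *: v) *m M) (h + r *: v) - pair ((h - r *: v) *m M) (h - r *: v)
   = 4 * r * pair (h *m M) v.
  rewrite !mulmxDl !mulNmx -!scalemxAl !pairDl !pairDr !pairNl !pairNr !pairZl !pairZr.
  rewrite (sym v h); ring.
have b1 : N (h + r *: v) <= 2 * r.
  apply: le_trans (Ntri hN _ _) _; rewrite (NZ hN) (ger0_norm (ltW r0)).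
  have : r * N v <= r by rewrite -[leRHS]mulr1 ler_wpM2l // ltW.
  rewrite -/r; lra.
have b2 : N (h - r *: v) <= 2 * r.
  apply: le_trans (Ntri hN _ _) _; rewrite (NN hN) (NZ hN) (ger0_norm (ltW r0)).
  have : r * N v <= r by rewrite -[leRHS]mulr1 ler_wpM2l // ltW.
  rewrite -/r; lra.
have q1 := HQ (h + r *: v); have q2 := HQ (h - r *: v).
have s1 : N (h + r *: v) ^+ 2 <= (2 * r) ^+ 2 by rewrite lerXn2r // ?nnegrE ?(Nge0 hN) // mulr_ge0 // ltW.
have s2 : N (h - r *: v) ^+ 2 <= (2 * r) ^+ 2 by rewrite lerXn2r // ?nnegrE ?(Nge0 hN) // mulr_ge0 // ltW.
have t1 : c * N (h + r *: v) ^+ 2 <= c * (2 * r) ^+ 2 by exact: ler_wpM2l.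
have t2 : c * N (h - r *: v) ^+ 2 <= c * (2 * r) ^+ 2 by exact: ler_wpM2l.
move: q1 q2; rewrite !ler_norml => /andP[_ q1] /andP[q2 _].
have : 4 * r * pair (h *m M) v <= 4 * r * (2 * c * r).
  rewrite -id4; nra.
by rewrite ler_pM2l ?mulr_gt0.
Qed.

Variables (D : set 'rV[R]_n) (f : 'rV[R]_n -> R) (gf : 'rV[R]_n -> 'rV[R]_n)
  (Hf : 'rV[R]_n -> 'M[R]_n) (L2 : R).
Hypothesis df : forall y, differentiable f y.
Hypothesis dfE : forall y h, 'd f y h = pair (gf y) h.
Hypothesis dgf : forall y, differentiable gf y.
Hypothesis dgfE : forall y h, 'd gf y h = h *m Hf y.
Hypothesis cD : Defs.convex_set D.
Hypothesis L20 : 0 <= L2.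
Hypothesis Lip : forall y z, D y -> D z -> op_norm N (Hf y - Hf z) <= L2 * N (y - z).
Hypothesis sym : forall p u w, pair (u *m Hf p) w = pair (w *m Hf p) u.

Lemma remainder x y v : D x -> D y -> N v <= 1 ->
  pair (gf y - gf x - (y - x) *m Hf x) v <= L2 * N (y - x) ^+ 2.
Proof.
move=> Dx Dy Nv.
set h := y - x; set r := N h.
have r0 : 0 <= r by exact: Nge0.
set k1 := pair (h *m Hf x) v; set k2 := L2 * r ^+ 2.
set phi := fun u : R => pair (gf (x + u *: h)) v - u * k1 - k2 * (u * u).
have dphi : forall s : R, is_derive s 1 phi
    (pair (h *m Hf (x + s *: h)) v - k1 - k2 * (s + s)).
  move=> s.
  have H1 := is_deriveB (is_deriveB (gf_path dgf dgfE x h v s) (der_lin s k1))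
    (is_deriveZ k2 (der_sq s)).
  have -> : phi = ((fun u : R => pair (gf (x + u *: h)) v) - (fun u : R => u * k1))
                 - k2 *: (fun u : R => u * u).
    by apply: funext => u.
  exact: H1.
have cphi : {within `[0, 1], continuous phi}.
  by apply: cont_of_derive => s; exact: (@ex_derive _ _ _ _ _ _ _ (dphi s)).
have [c cI Ec] := MVT ltr01 (fun s _ => dphi s) cphi.
have c01 : 0 <= c <= 1 by move: cI; rewrite in_itv /= => /andP[/ltW -> /ltW ->].
have Dc := Dseg cD Dx Dy c01.
set M := Hf (x + c *: h) - Hf x.
have symM : forall u w, pair (u *m M) w = pair (w *m M) u.
  by move=> u w; rewrite /M !mulmxBr !pairBl (sym (x + c *: h) u) (sym x u).
have opM : op_norm N M <= L2 * (c * r).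
  have := Lip Dc Dx; rewrite addrAC subrr add0r (NZ hN) ger0_norm //.
  by case/andP: c01.
have HQ : forall w, `|pair (w *m M) w| <= L2 * (c * r) * N w ^+ 2.
  move=> w; apply: le_trans (op_le hN M w) _; apply: ler_wpM2r => //.
  by rewrite exprn_ge0 // Nge0.
have c0 : 0 <= c by case/andP: c01.
have pM := polar h (mulr_ge0 L20 (mulr_ge0 c0 r0)) symM HQ Nv.
have deriv_le : pair (h *m Hf (x + c *: h)) v - k1 - k2 * (c + c) <= 0.
  have : pair (h *m Hf (x + c *: h)) v - k1 = pair (h *m M) v.
    by rewrite /M mulmxBr pairBl.
  move=> ->; rewrite /k2 -/r; move: pM; rewrite -/r; nra.
move: Ec; rewrite /phi => Ec.
have e1 : x + 1 *: h = y by rewrite scale1r /h addrC subrK.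
have e0 : x + 0 *: h = x by rewrite scale0r addr0.
rewrite e1 e0 in Ec.
rewrite !pairBl -/k1.
lra.
Qed.
End Rem.
Section Alg.
Variable R : realType.
Lemma final_alg (L2 sigma mu H g r : R) :
  0 < sigma -> 0 < mu -> 0 < H -> 0 <= L2 -> 0 <= g -> 0 <= r ->
  let A := sigma^-1 * Num.sqrt (H / 3 * g) in
  (mu + A * sigma) * r ^+ 2 <= g * r ->
  L2 * r ^+ 2 + A * r <=
    2 * (sigma^-1 + 3 * L2 / (2 * H)) / mu * Num.sqrt (H / 3) * (g * Num.sqrt g).
Proof.
move=> s0 m0 H0 L0 g0 r0 A hyp.
set s := Num.sqrt g; set q := Num.sqrt (H / 3).
have q0 : 0 < q by rewrite sqrtr_gt0 divr_gt0.
have s0' : 0 <= s by exact: sqrtr_ge0.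
have gs : g = s ^+ 2 by rewrite sqr_sqrtr.
have Hq : H = 3 * q ^+ 2 by rewrite sqr_sqrtr ?divr_ge0 ?ltW //; field.
have As : A = q * s / sigma by rewrite /A sqrtrM ?divr_ge0 ?ltW // mulrC.
have Asig : A * sigma = q * s by rewrite As; field; exact: lt0r_neq0.
have RHS : 2 * (sigma^-1 + 3 * L2 / (2 * H)) / mu * q * (g * s)
         = 2 * q * s ^+ 3 / (sigma * mu) + L2 * s ^+ 3 / (q * mu).
  rewrite gs Hq; field.
  by rewrite !lt0r_neq0 // ?mulr_gt0 // exprn_gt0.
rewrite RHS.
have [->|rp] := eqVneq r 0.
  rewrite expr0n /= !mulr0 addr0.
  by apply: addr_ge0; apply: divr_ge0; rewrite ?mulr_ge0 ?exprn_ge0 // ltW // mulr_gt0.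
have rpos : 0 < r by rewrite lt_neqAle eq_sym rp.
have h2 : (mu + q * s) * r <= s ^+ 2.
  rewrite -Asig -gs; move: hyp; rewrite expr2 mulrA ler_pM2r //.
have mr : mu * r <= s ^+ 2 by have := mulr_ge0 (mulr_ge0 (ltW q0) s0') (ltW rpos); nra.
have qr : q * s * r <= s ^+ 2 by have := mulr_ge0 (ltW m0) (ltW rpos); nra.
have spos : 0 < s.
  rewrite lt_neqAle s0' andbT; apply/eqP => s00; move: mr; rewrite -s00 expr0n /=.
  by move=> h; have := mulr_gt0 m0 rpos; lra.
have r1 : r <= s ^+ 2 / mu by rewrite ler_pdivlMr // mulrC.
have r2 : r <= s / q.
  rewrite ler_pdivlMr // -(ler_pM2l spos); move: qr; rewrite expr2; nra.
have t1 : A * r <= 2 * q * s ^+ 3 / (sigma * mu).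
  rewrite As.
  have : q * s / sigma * r <= q * s / sigma * (s ^+ 2 / mu).
    by apply: ler_wpM2l => //; apply: divr_ge0; rewrite ?mulr_ge0 // ltW.
  move/le_trans; apply.
  have -> : q * s / sigma * (s ^+ 2 / mu) = q * s ^+ 3 / (sigma * mu).
    by field; rewrite !lt0r_neq0.
  rewrite ler_pM2r ?invr_gt0 ?mulr_gt0 //.
  by have := mulr_ge0 (ltW q0) (exprn_ge0 3 s0'); lra.
have t2 : L2 * r ^+ 2 <= L2 * s ^+ 3 / (q * mu).
  rewrite -mulrA; apply: ler_wpM2l => //.
  have : r ^+ 2 <= (s ^+ 2 / mu) * (s / q).
    rewrite expr2; apply: ler_pM => //; exact: ltW.
  by move/le_trans; apply; rewrite le_eqVlt; apply/orP; left; apply/eqP; field; rewrite !lt0r_neq0.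
lra.
Qed.
End Alg.

Unset Implicit Arguments. Set Strict Implicit.

Theorem theorem4 (R : realType) (n : nat) (N : 'rV[R]_n -> R)
  (D : set 'rV[R]_n) (psi f d : 'rV[R]_n -> R)
  (gf gd : 'rV[R]_n -> 'rV[R]_n) (Hf : 'rV[R]_n -> 'M[R]_n)
  (L2 sigma mu H : R) (x : nat -> 'rV[R]_n) (Fp : nat -> 'rV[R]_n) :
  is_norm N ->
  closed_convex_fun D psi ->
  (* f convex, twice continuously differentiable, gradient gf, Hessian Hf *)
  convex_on setT f ->
  (forall y, differentiable f y) ->
  (forall y h, 'd f y h = pair (gf y) h) ->
  (forall y, differentiable gf y) ->
  (forall y h, 'd gf y h = h *m Hf y) ->
  continuous Hf ->
  0 <= L2 ->
  (forall y z, D y -> D z -> op_norm N (Hf y - Hf z) <= L2 * N (y - z)) ->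
  (* scaling function d *)
  (forall y, differentiable d y) ->
  (forall y h, 'd d y h = pair (gd y) h) ->
  0 < sigma <= 1 ->
  (forall y z, D y -> D z ->
     d y + pair (gd y) (z - y) + sigma / 2 * N (z - y) ^+ 2 <= d z) ->
  (forall y z, D y -> D z -> dual_norm N (gd y - gd z) <= N (y - z)) ->
  (* strong convexity of f on dom psi *)
  0 < mu ->
  (forall y h, D y -> mu * N h ^+ 2 <= pair (h *m Hf y) h) ->
  (* the method *)
  0 < H -> L2 <= H ->
  D (x 0%N) ->
  subdiff D (fun y => f y + psi y) (x 0%N) (Fp 0%N) ->
  (forall k : nat,
     let A := sigma^-1 * Num.sqrt (H / 3 * dual_norm N (Fp k)) in
     is_T D f psi d gf gd Hf A (x k) (x k.+1) /\
     Fp k.+1 = gf (x k.+1) - gf (x k) - (x k.+1 - x k) *m Hf (x k)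
               - A *: (gd (x k.+1) - gd (x k))) ->
  forall k : nat,
    let c := sigma^-1 + 3 * L2 / (2 * H) in
    dual_norm N (Fp k.+1) <=
      2 * c / mu * Num.sqrt (H / 3) *
      (dual_norm N (Fp k) * Num.sqrt (dual_norm N (Fp k))).
Proof.
move=> hN [cD cpsi _] _ df dfE dgf dgfE cHf L20 Lip dd ddE /andP[sg0 _] sconv
  dLip mu0 smu H0 _ Dx0 sub0 iter k; cbv zeta.
have sym := schwarz df dfE dgf dgfE cHf.
have A0 : forall j, 0 <= sigma^-1 * Num.sqrt (H / 3 * dual_norm N (Fp j)).
  by move=> j; apply: mulr_ge0; [rewrite invr_ge0 ltW|exact: sqrtr_ge0].
have Fdiff : forall j, Fp j.+1 - gf (x j.+1) =
   - (gf (x j) + (x j.+1 - x j) *m Hf (x j)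
      + (sigma^-1 * Num.sqrt (H / 3 * dual_norm N (Fp j))) *: (gd (x j.+1) - gd (x j))).
  move=> j; have [_ ->] := iter j.
  by apply/rowP => i; rewrite !mxE; ring.
have inv : forall j, D (x j) /\
    forall z, D z -> pair (Fp j - gf (x j)) (z - x j) <= psi z - psi (x j).
  elim => [|j [Dj IHj]].
    by split => // z Dz; exact: (inv0 cD cpsi df dfE Dx0 sub0 Dz).
  have [hT _] := iter j.
  split; first by case: hT.
  move=> z Dz; rewrite Fdiff.
  exact: (inv_step cD cpsi dd ddE (sym (x j)) (A0 j) hT Dz).
have [Dx IHx] := inv k; have [Dy IHy] := inv k.+1.
have [_ hF] := iter k.

set g := dual_norm N (Fp k).
set A := sigma^-1 * Num.sqrt (H / 3 * g).
have Ap : 0 <= A := A0 k.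
set h := x k.+1 - x k; set r := N h.
have r0 : 0 <= r := Nge0 hN h.
have g0 : 0 <= g := dual_ge0 hN (Fp k).
have k1 := IHx _ Dy; rewrite -/h in k1.
have k2 := IHy _ Dx; rewrite Fdiff -/g -/A -/h in k2.
have xy : x k - x k.+1 = - h by rewrite /h opprB.
rewrite xy pairNl pairNr opprK !pairDl pairZl in k2.
rewrite pairBl in k1.
have Qh := smu (x k) h Dx; rewrite -/r in Qh.
have s1 := sconv _ _ Dx Dy; have s2 := sconv _ _ Dy Dx.
rewrite -/h -/r in s1; rewrite xy (NN hN) -/r pairNr in s2.
have sc : sigma * r ^+ 2 <= pair (gd (x k.+1) - gd (x k)) h.
  by rewrite pairBl; lra.
have pF : - pair (Fp k) h <= g * r.
  by have := pair_le_dual hN (Fp k) (- h); rewrite pairNr (NN hN).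
have Asc : A * (sigma * r ^+ 2) <= A * pair (gd (x k.+1) - gd (x k)) h
  by exact: ler_wpM2l.
have hyp : (mu + A * sigma) * r ^+ 2 <= g * r.
  have e : (mu + A * sigma) * r ^+ 2 = mu * r ^+ 2 + A * (sigma * r ^+ 2) by ring.
  rewrite e; lra.
apply: le_trans (final_alg sg0 mu0 H0 L20 g0 r0 hyp).
apply: (dual_le hN) => v Nv.
rewrite hF -/g -/A -/h pairBl pairZl.
have rem := remainder hN dgf dgfE cD L20 Lip sym Dx Dy Nv.
rewrite -/h -/r in rem.
have gdb : - pair (gd (x k.+1) - gd (x k)) v <= r.
  have := pair_le_dual hN (gd (x k.+1) - gd (x k)) (- v).
  rewrite pairNr (NN hN) => h1; apply: le_trans h1 _.
  have := dLip _ _ Dy Dx; rewrite -/h -/r => h2.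
  have := dual_ge0 hN (gd (x k.+1) - gd (x k)) => h3.
  have : dual_norm N (gd (x k.+1) - gd (x k)) * N v <= dual_norm N (gd (x k.+1) - gd (x k)) * 1.
    exact: ler_wpM2l.
  lra.
have : A * (- pair (gd (x k.+1) - gd (x k)) v) <= A * r by exact: ler_wpM2l.
lra.
Qed.
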